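(* Let $m,n\geq2$ and let $\mathbf p\in\mathbb R^m$, $\mathbf q\in\mathbb R^n$ be probability vectors with all entries strictly positive. If $P\in\mathcal C(\mathbf p,\mathbf q)$ is local optimal and $V(P)$ is a tree, then $|V(P)|=m+n-1$.
   Context: $\mathcal C(\mathbf p,\mathbf q)$: nonnegative $m\times n$ matrices $P=(p_{i,j})$ with row sums $p_i$, column sums $q_j$. $V(P)=\{(i,j):p_{i,j}\neq0\}$. Graph notions on $[m]\times[n]$: distinct points adjacent iff they share a row or column; a circuit is a cyclic sequence $v_0,\dots,v_{s-1}$ ($s\ge4$) of pairwise distinct points $v_k=(i_k,j_k)$ with (indices mod $s$) $v_k,v_{k+1}$ adjacent and $(i_{k+2}-i_k)(j_{k+2}-j_k)\neq0$ for all $k$; a tree is a connected subset with no circuit. $H(A)=-\sum a_{i,j}\log a_{i,j}$ ($0\log0=0$). Moves on $P$ (each yields $P'\in\mathcal C(\mathbf p,\mathbf q)$ by replacing the chosen submatrix $A$ by $A'$): (M1) distinct rows $i_1,i_2$, distinct columns $j_1,j_2$, $a_{s,t}=p_{i_s,j_t}$; if $\max(a_{1,1},a_{2,2})\ge\max(a_{1,2},a_{2,1})$, put $b=\min(a_{1,2},a_{2,1})$, $a'_{s,s}=a_{s,s}+b$, $a'_{1,2}=a_{1,2}-b$, $a'_{2,1}=a_{2,1}-b$. (M2) same replacement, allowed when $a_{1,1}+a_{1,2}\ge a_{2,1}+a_{2,2}$, $a_{1,1}+a_{2,1}\ge a_{1,2}+a_{2,2}$, $a_{1,2}\ge a_{2,1}$.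 (M3) distinct rows $i_1,i_2$, distinct columns $j_1,\dots,j_r$ ($r\ge2$), $a_{s,k}=p_{i_s,j_k}$, allowed when $a_{2,k}=0$ ($k\ge2$) and $\sum_{k\ge2}a_{1,k}\le a_{2,1}\le\sum_{k\ge1}a_{1,k}$; replace by $a'_{1,1}=\sum_ka_{1,k}$, $a'_{1,k}=0$, $a'_{2,1}=a_{2,1}-\sum_{k\ge2}a_{1,k}$, $a'_{2,k}=a_{1,k}$ ($k\ge2$); moves may also be applied with rows and columns exchanged. $P$ is local optimal if no such move produces $P'$ with $H(P')<H(P)$. *)

(* Defs.v *)
From HB Require Import structures.
From mathcomp Require Import all_boot all_order all_algebra.
From mathcomp Require Import all_classical all_reals exp.
Set Implicit Arguments. Unset Strict Implicit. Unset Printing Implicit Defensive.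
Import Order.TTheory GRing.Theory Num.Theory.
Local Open Scope ring_scope.

Section Defs.
Variable R : realType.

Definition xlogx (x : R) : R := if x == 0 then 0 else x * ln x.

Definition entropy m n (A : 'M[R]_(m, n)) : R :=
  - \sum_(i < m) \sum_(j < n) xlogx (A i j).

Definition coupling m n (p : 'I_m -> R) (q : 'I_n -> R) (P : 'M[R]_(m, n)) :=
  [/\ forall i j, 0 <= P i j,
      forall i, \sum_(j < n) P i j = p i &
      forall j, \sum_(i < m) P i j = q j].

Definition supp m n (P : 'M[R]_(m, n)) : {set 'I_m * 'I_n} :=
  [set x | P x.1 x.2 != 0].

(* Replacement used by moves M1 and M2:
   a'_{11} = a_{11}+b, a'_{22} = a_{22}+b, a'_{12} = a_{12}-b, a'_{21} = a_{21}-b *)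
Definition swap2 m n (P : 'M[R]_(m, n)) i1 i2 j1 j2 (b : R) : 'M[R]_(m, n) :=
  \matrix_(i, j)
    (P i j + b * (((i == i1) && (j == j1))%:R + ((i == i2) && (j == j2))%:R
                 - ((i == i1) && (j == j2))%:R - ((i == i2) && (j == j1))%:R)).

Definition moveM1 m n (P P' : 'M[R]_(m, n)) :=
  exists i1 i2 j1 j2, [/\ i1 != i2, j1 != j2,
    Num.max (P i2 j2) (P i1 j1) >= Num.max (P i1 j2) (P i2 j1) &
    P' = swap2 P i1 i2 j1 j2 (Num.min (P i1 j2) (P i2 j1))].

Definition moveM2 m n (P P' : 'M[R]_(m, n)) :=
  exists i1 i2 j1 j2, [/\ i1 != i2, j1 != j2,
    [/\ P i1 j1 + P i1 j2 >= P i2 j1 + P i2 j2,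
        P i1 j1 + P i2 j1 >= P i1 j2 + P i2 j2 &
        P i1 j2 >= P i2 j1] &
    P' = swap2 P i1 i2 j1 j2 (Num.min (P i1 j2) (P i2 j1))].

(* Move M3, in the row orientation: columns j_1 = j1 and {j_2,...,j_r} = J
   (r >= 2 means #|J| > 0; distinctness means j1 \notin J). *)
Definition moveM3_result m n (P : 'M[R]_(m, n)) i1 i2 j1 (J : {set 'I_n}) :
  'M[R]_(m, n) :=
  \matrix_(i, j)
    (if i == i1 then
       (if j == j1 then P i1 j1 + \sum_(k in J) P i1 k
        else if j \in J then 0 else P i j)
     else if i == i2 then
       (if j == j1 then P i2 j1 - \sum_(k in J) P i1 k
        else if j \in J then P i1 j else P i j)
     else P i j).

Definition moveM3 m n (P P' : 'M[R]_(m, n)) :=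
  exists i1 i2 j1 (J : {set 'I_n}), [/\ [/\ i1 != i2, j1 \notin J & (0 < #|J|)%N],
    (forall k, k \in J -> P i2 k = 0),
    \sum_(k in J) P i1 k <= P i2 j1 <= P i1 j1 + \sum_(k in J) P i1 k &
    P' = moveM3_result P i1 i2 j1 J].

Definition move_rows m n (P P' : 'M[R]_(m, n)) :=
  moveM1 P P' \/ moveM2 P P' \/ moveM3 P P'.

Definition move m n (P P' : 'M[R]_(m, n)) :=
  move_rows P P' \/ move_rows P^T P'^T.

Definition local_optimal m n (P : 'M[R]_(m, n)) :=
  forall P', move P P' -> ~ (entropy P' < entropy P).

End Defs.

Section Graph.
Variables m n : nat.
Notation pt := ('I_m * 'I_n)%type.

Definition adjacent (u v : pt) : bool :=
  (u != v) && ((u.1 == v.1) || (u.2 == v.2)).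

Definition is_circuit (c : seq pt) : bool :=
  [&& (4 <= size c)%N, uniq c &
   [forall k : 'I_(size c),
      let v0 := tnth (in_tuple c) k in
      let v1 := nth v0 c ((k + 1) %% size c) in
      let v2 := nth v0 c ((k + 2) %% size c) in
      adjacent v0 v1 && ((v2.1 != v0.1) && (v2.2 != v0.2))]].

Definition connected_set (S : {set pt}) : Prop :=
  forall u v, u \in S -> v \in S ->
    exists s : seq pt, [&& path adjacent u s, last u s == v & all (mem S) s].

Definition is_tree (S : {set pt}) : Prop :=
  connected_set S /\
  ~ (exists c : seq pt, is_circuit c /\ all (mem S) c).

End Graph.

(* Main.v *)
Require Import Defs.
From HB Require Import structures.
From mathcomp Require Import all_boot all_order all_algebra.
From mathcomp Require Import all_classical all_reals exp.
From mathcomp Require Import zify.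
Import Order.TTheory GRing.Theory Num.Theory.

Section Comb.
Variables m n : nat.
Notation pt := ('I_m * 'I_n)%type.
Local Notation adj := (@adjacent m n).

Section LB.
Variable S : {set pt}.
Variable u : pt.
Hypothesis uS : u \in S.
Hypothesis conn : connected_set S.

Definition reach k (x : pt) : bool :=
  [exists s : k.-tuple pt, [&& path adj u s, last u s == x & all (mem S) s]].

Lemma reach_ex x : x \in S -> exists k, reach k x.
Proof.
move=> xS; have [s /and3P[h1 h2 h3]] := conn u x uS xS.
exists (size s); apply/existsP; exists (in_tuple s); by rewrite /= h1 h2 h3.
Qed.

Definition dist x : nat :=
  match pselect (exists k, reach k x) with left h => ex_minn h | right _ => 0%N end.

Lemma dist_spec x : x \in S -> reach (dist x) x /\ forall k, reach k x -> (dist x <= k)%N.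
Proof.
move=> /reach_ex h; rewrite /dist; case: pselect => // h'.
by case: ex_minnP => k hk hmin.
Qed.

Lemma dist_pred x : x \in S -> x != u ->
  exists y, [/\ y \in S, adj y x & (dist y < dist x)%N].
Proof.
move=> xS xu; have [/existsP[s /and3P[h1 h2 h3]] _] := dist_spec x xS.
have sz : size s = dist x by rewrite size_tuple.
move: h1 h2 h3 sz; case/lastP: (val s) => [|s' x'].
  by move=> _ /= /eqP ux; rewrite ux eqxx in xu.
rewrite rcons_path last_rcons all_rcons size_rcons => /andP[p1 p2] /eqP ex /andP[_ a2] sz; subst x'.
have lS : last u s' \in S.
  have := mem_last u s'; rewrite in_cons => /orP[/eqP -> //|].
  by move=> hin; move/allP: a2 => /(_ _ hin).
exists (last u s'); split => //.
have [_ hmin] := dist_spec _ lS.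
have : reach (size s') (last u s').
  by apply/existsP; exists (in_tuple s'); rewrite /= p1 eqxx a2.
move/hmin; rewrite -sz; lia.
Qed.

Definition onL (L : 'I_m + 'I_n) (x : pt) : bool :=
  match L with inl i => x.1 == i | inr j => x.2 == j end.

Hypothesis cov : forall L : 'I_m + 'I_n, exists x, x \in S /\ onL L x.

Definition g L := odflt u [pick x | [&& x \in S, onL L x &
   [forall y, ((y \in S) && onL L y) ==> (dist y >= dist x)%N]]].

Lemma g_spec L : [/\ g L \in S, onL L (g L) &
   forall y, y \in S -> onL L y -> (dist (g L) <= dist y)%N].
Proof.
rewrite /g; case: pickP => [x /and3P[h1 h2 /forallP h3]|none] /=.
  split => // y yS yL; by have := h3 y; rewrite yS yL.
exfalso.
have ex : exists k, [exists x, [&& x \in S, onL L x & dist x == k]].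
  have [x [xS xL]] := cov L; exists (dist x); apply/existsP; exists x; by rewrite xS xL eqxx.
case: (ex_minnP ex) => k /existsP[x /and3P[xS xL /eqP dk]] hmin.
have := none x; rewrite xS xL /=; move/negbT/negP; apply; apply/forallP => y; apply/implyP => /andP[yS yL].
rewrite dk; apply: hmin; apply/existsP; exists y; by rewrite yS yL eqxx.
Qed.

Lemma lb : (m + n <= #|S| + 1)%N.
Proof.
pose A := [set L | g L != u].
have hB : (#|~: A| <= 2)%N.
  apply: (leq_trans (n:=#|[set inl u.1; inr u.2]|)).
   apply: subset_leq_card; apply/fintype.subsetP => L; rewrite !inE negbK => /eqP gu.
   have [_ hL _] := g_spec L; move: hL; rewrite gu; case: L {gu} => [i|j] /= /eqP ->; by rewrite eqxx ?orbT.
  by rewrite cards2.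
have hA : (#|A| <= #|S| - 1)%N.
  have inj : {in A &, injective g}.
    move=> L1 L2; rewrite !inE => h1 h2 e.
    have [x1S x1L x1m] := g_spec L1; have [x2S x2L x2m] := g_spec L2.
    have [y [yS /andP[yx yadj] dy]] := dist_pred _ x1S h1.
    have n1 : ~~ onL L1 y by apply/negP => yL; have := x1m y yS yL; by rewrite leqNgt dy.
    have n2 : ~~ onL L2 y by apply/negP => yL; have := x2m y yS yL; rewrite -e; by rewrite leqNgt dy.
    rewrite -e in x2L.
    move: (g L1) x1L x2L yadj yx dy e x1m x1S h1 => x x1L x2L yadj _ _ _ _ _ _.
    clear -x1L x2L n1 n2 yadj; move: x1L x2L n1 n2 yadj.
    case: L1 => [i1|j1]; case: L2 => [i2|j2] /=.
    - by move=> /eqP <- /eqP <-.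
    - by move=> /eqP e1 /eqP e2; rewrite -e1 -e2 => /negPf-> /negPf->.
    - by move=> /eqP e1 /eqP e2; rewrite -e1 -e2 => /negPf-> /negPf->.
    - by move=> /eqP <- /eqP <-.
  rewrite -(card_in_imset inj).
  have sub : g @: A \subset S :\ u.
    apply/fintype.subsetP => x /imsetP[L LA ->]; rewrite !inE; have [-> _ _] := g_spec L.
    by rewrite inE in LA; rewrite LA.
  have := subset_leq_card sub; by rewrite (cardsD1 u S) uS add1n subn1.
have := cardsC A; rewrite card_sum !card_ord.
have : (0 < #|S|)%N by apply/card_gt0P; exists u.
lia.
Qed.
End LB.

Definition crd (b : bool) (v : pt) : nat := if b then val v.1 else val v.2.

Lemma crd_eqE b v w : (crd b v == crd b w) = (if b then v.1 == w.1 else v.2 == w.2).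
Proof. by case: b; rewrite /crd val_eqE. Qed.

Lemma pt_eqE b v w : (v == w) = (crd b v == crd b w) && (crd (~~b) v == crd (~~b) w).
Proof.
case: v w => [v1 v2] [w1 w2]; case: b; rewrite !crd_eqE /= xpair_eqE //.
by rewrite andbC.
Qed.

Definition differ (v w : pt) := (v.1 != w.1) && (v.2 != w.2).

Lemma differE b v w : differ v w = (crd b v != crd b w) && (crd (~~b) v != crd (~~b) w).
Proof. by case: b; rewrite !crd_eqE //= andbC. Qed.

Lemma adjE b v w : adj v w = (v != w) && ((crd b v == crd b w) || (crd (~~b) v == crd (~~b) w)).
Proof. by case: b; rewrite /adjacent !crd_eqE //= orbC. Qed.

Lemma F1 b v w : v != w -> crd b v = crd b w -> crd (~~b) v != crd (~~b) w.
Proof. move=> vw e; apply/negP => e2; move: vw; by rewrite (pt_eqE b) e eqxx e2. Qed.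

Lemma F2 b v w : adj v w -> crd b v != crd b w -> crd (~~b) v = crd (~~b) w.
Proof.
rewrite (adjE b) => /andP[_ /orP[/eqP->|/eqP//]]; by rewrite eqxx.
Qed.

Arguments F1 {b v w}.
Arguments F2 {b v w}.

Lemma ar_a i k : (i < k)%N -> [/\ ((i + 1) %% k.+2 = i.+1)%N, ((i + 2) %% k.+2 = i.+2)%N,
   (i < k.+2)%N, (i.+1 < k.+2)%N & (i.+2 < k.+2)%N].
Proof. move=> h; split; try lia; rewrite modn_small; lia. Qed.
Lemma ar_b k : ((k + 1) %% k.+2 = k.+1)%N /\ ((k + 2) %% k.+2 = 0)%N.
Proof. split; last by rewrite addn2 modnn. rewrite modn_small; lia. Qed.
Lemma ar_c k : ((k.+1 + 1) %% k.+2 = 0)%N /\ ((k.+1 + 2) %% k.+2 = 1)%N.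
Proof.
split; first by rewrite addn1 modnn.
have -> : (k.+1 + 2 = k.+2 + 1)%N by lia.
rewrite modnDl modn_small //; lia.
Qed.
Lemma ar_d i k : (i < k.+2)%N -> (k < i)%N -> i = k.+1.
Proof. lia. Qed.

Section Path.
Variable S : {set pt}.
Variable z : pt.

Definition apath (l : seq pt) := [/\ uniq l, all (mem S) l,
  forall i, (i.+1 < size l)%N -> adj (nth z l i) (nth z l i.+1) &
  forall i, (i.+2 < size l)%N -> differ (nth z l i) (nth z l i.+2)].

Lemma circuitP c : (4 <= size c)%N -> uniq c ->
  (forall i, (i < size c)%N -> adj (nth z c i) (nth z c ((i+1) %% size c)) &&
        differ (nth z c i) (nth z c ((i+2) %% size c))) -> is_circuit c.
Proof.
move=> h4 hu h; rewrite /is_circuit h4 hu /=; apply/forallP => k /=.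
rewrite (tnth_nth z) /=.
have s0 : (0 < size c)%N by lia.
have e : forall i, nth (nth z c k) c (i %% size c) = nth z c (i %% size c).
  by move=> i; apply: set_nth_default; rewrite ltn_pmod.
rewrite !e.
have /andP[a d] := h k (ltn_ord k); rewrite a /=.
by move: d; rewrite /differ => /andP[d1 d2]; rewrite eq_sym d1 eq_sym d2.
Qed.

Lemma apath_size l : apath l -> (size l <= #|{: pt}|)%N.
Proof. by case=> hu _ _ _; rewrite -(card_uniqP hu); apply: max_card. Qed.

Lemma apath1 : z \in S -> apath [:: z].
Proof. by move=> zS; split => //=; rewrite zS. Qed.

Lemma max_apath : z \in S -> exists l, apath l /\ forall l', apath l' -> (size l' <= size l)%N.
Proof.
move=> zS.
pose P k := `[< exists l, apath l /\ size l = k >].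
have ex : exists k, P k by exists 1%N; apply/asboolP; exists [:: z]; split => //; apply: apath1.
have ub : forall k, P k -> (k <= #|{: pt}|)%N.
  by move=> k /asboolP[l [hl <-]]; apply: apath_size.
case: (ex_maxnP ex ub) => k /asboolP[l [hl hk]] hmax; exists l; split => // l' hl'.
by rewrite hk; apply: hmax; apply/asboolP; exists l'.
Qed.

Lemma noleaf_circuit : z \in S ->
  (forall x b, x \in S -> exists y, [/\ y \in S, crd b y = crd b x & y != x]) ->
  exists c, is_circuit c /\ all (mem S) c.
Proof.
move=> zS nl.
have [l [[hu hS hadj hdif] hmax]] := max_apath zS.
case: l hu hS hadj hdif hmax => [|x l'] hu hS hadj hdif hmax.
  by have := hmax _ (apath1 zS).
have xS : x \in S by move: hS => /= /andP[].
have [b hb] : exists b, forall y l'', l' = y :: l'' -> crd b x != crd b y.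
  case: l' hadj {hu hS hdif hmax} => [|y l''] hadj; first by exists true.
  exists (crd true x != crd true y) => _ _ [<- _].
  case e: (crd true x == crd true y); rewrite ?e //=.
  have := hadj 0%N erefl; rewrite /= => axy.
  apply: (F1 (b:=true)); [by move: axy; rewrite /adjacent => /andP[]|by apply/eqP].
have [w [wS wb wx]] := nl x b xS.
have win : w \in l'.
  apply/negPn/negP => wn.
  have : apath (w :: x :: l').
    split.
    - by rewrite cons_uniq hu andbT in_cons negb_or wx wn.
    - by rewrite /= wS; exact: hS.
    - case => [|i] /= hi; last by apply: hadj.
      by rewrite (adjE b) wx wb eqxx.
    - case => [|i] /= hi; last by apply: hdif.
      case: l' {hu hS hdif hmax wn} hadj hb hi => [|y l''] hadj hb hi //=.
      have hy := hb y l'' erefl.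
      rewrite (differE b) wb hy /=.
      have axy : adj x y by apply: (hadj 0%N).
      rewrite -(F2 axy hy); exact: F1.
  by move/hmax => /=; rewrite ltnn.
case: l' hu hS hadj hdif hmax hb win => [|y l''] hu hS hadj hdif hmax hb win //.
set L := y :: l'' in hu hS hadj hdif hmax hb win *.
have hy := hb y l'' erefl.
pose Pb := fun v => crd b v == crd b x.
have hasP' : has Pb L by apply/hasP; exists w => //; rewrite /Pb wb.
set k := find Pb L.
have hk : (k < size L)%N by rewrite -has_find.
have fk : crd b (nth z L k) = crd b x by apply/eqP; exact: (nth_find z hasP').
have bef : forall i, (i < k)%N -> crd b (nth z L i) != crd b x.
  by move=> i hi; have := before_find z hi; rewrite /Pb => ->.
have xnL : x \notin L by move: hu; rewrite cons_uniq => /andP[].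
have nkx : nth z L k != x by apply/eqP => e; move: xnL; rewrite -e mem_nth.
have axy : adj x y by apply: (hadj 0%N).
have cy : crd (~~b) y = crd (~~b) x by rewrite (F2 axy hy).
have ck : crd (~~b) (nth z L k) != crd (~~b) x by apply: F1.
have k1 : (1 <= k)%N.
  rewrite lt0n; apply/eqP => ek; move: fk; rewrite ek /L /= => /eqP.
  by rewrite eq_sym (negPf hy).
have k2 : (2 <= k)%N.
  rewrite ltn_neqAle k1 andbT; apply/eqP => ek.
  have hk' : (2 < size (x :: L))%N by rewrite /= ltnS ek.
  have := hdif 0%N hk'; rewrite (differE b) /=; rewrite -ek in fk; by rewrite fk eqxx.
exists (take k.+2 (x :: L)); split; last first.
  by apply/allP => v /mem_take; apply: (allP hS).
have hkL : (k.+2 <= size (x :: L))%N by rewrite /= ltnS.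
have sz : size (take k.+2 (x :: L)) = k.+2 by rewrite size_takel.
apply: circuitP.
- by rewrite sz.
- by apply: take_uniq.
rewrite sz => i hi.
have nt : forall j, (j < k.+2)%N -> nth z (take k.+2 (x :: L)) j = nth z (x :: L) j.
  by move=> j hj; rewrite nth_take.
have [ik|] := ltnP i k.
  have [e1 e2 h0 h1 h2] := ar_a _ _ ik.
  have hs1 : (i.+1 < size (x :: L))%N by apply: leq_trans hkL; apply: ltnW.
  have hs2 : (i.+2 < size (x :: L))%N by apply: leq_trans hkL.
  rewrite e1 e2 !nt //.
  by rewrite hadj // hdif.
rewrite leq_eqVlt => /orP[/eqP ei|].
  subst i.
  have [e1 e2] := ar_b k.
  rewrite e1 e2 !nt ?ltnSn ?ltnS ?leqnSn //.
  rewrite hadj; last by [].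
  have [k' ek] : exists k', k = k'.+1 by move: k1; case: (k) => // k'' _; exists k''.
  have nxk : nth z (x :: L) k = nth z L k' by rewrite ek.
  have ak : adj (nth z L k') (nth z L k).
    rewrite ek; apply: (hadj k'.+1); by rewrite /= -ek ltnS.
  have bk' : crd b (nth z L k') != crd b x by apply: bef; rewrite ek.
  have hb' : crd b (nth z L k') != crd b (nth z L k) by rewrite fk.
  rewrite nxk /= (differE b) bk' /= (F2 ak hb'); exact: ck.
move=> ki; have ei := ar_d _ _ hi ki.
subst i.
have [e1 e2] := ar_c k.
rewrite e1 e2 !nt //=.

rewrite (adjE b) nkx fk eqxx /= (differE b) fk hy cy ck.
by [].
Qed.
End Path.

Lemma leaf (S : {set pt}) : S != finset.set0 -> ~ (exists c, is_circuit c /\ all (mem S) c) ->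
  exists x b, x \in S /\ forall y, y \in S -> crd b y = crd b x -> y = x.
Proof.
move=> /set0Pn[z zS] hnc.
case: (pselect (exists x b, x \in S /\ forall y, y \in S -> crd b y = crd b x -> y = x)) => // h.
exfalso; apply: hnc; apply: (@noleaf_circuit S z zS) => x b xS.
case: (pselect (exists y, [/\ y \in S, crd b y = crd b x & y != x])) => // h2.
exfalso; apply: h; exists x, b; split => // y yS ey.
apply/eqP/negPn/negP => yx; apply: h2; by exists y.
Qed.

Lemma ub k : forall S : {set pt}, #|S| = k.+1 ->
  ~ (exists c, is_circuit c /\ all (mem S) c) ->
  (#|S| + 1 <= #|[set x.1 | x in S]| + #|[set x.2 | x in S]|)%N.
Proof.
elim: k => [|k IH] S hS hnc.
  by have [x ->] := cards1P (introT eqP hS); rewrite !imset_set1 !cards1.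
have [x [b [xS hx]]] : exists x b, x \in S /\ forall y, y \in S -> crd b y = crd b x -> y = x.
  by apply: leaf => //; rewrite -card_gt0 hS.
set S' := S :\ x.
have hS' : #|S'| = k.+1 by move: hS; rewrite (cardsD1 x S) xS add1n => -[].
have hnc' : ~ (exists c, is_circuit c /\ all (mem S') c).
  move=> [c [hc ha]]; apply: hnc; exists c; split => //.
  by apply/allP => v /(allP ha) /=; rewrite !inE => /andP[].
have := IH S' hS' hnc'.
have sub1 : [set y.1 | y in S'] \subset [set y.1 | y in S] := imsetS _ (subD1set S x).
have sub2 : [set y.2 | y in S'] \subset [set y.2 | y in S] := imsetS _ (subD1set S x).
have c1 := subset_leq_card sub1; have c2 := subset_leq_card sub2.
have eS : #|S| = (#|S'| + 1)%N by rewrite hS hS' addn1.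
case: b hx => hx.
  have : [set y.1 | y in S'] \proper [set y.1 | y in S].
    apply/properP; split => //; exists x.1; first by apply/imsetP; exists x.
    apply/imsetP => -[y yS' e]; move: yS'; rewrite !inE => /andP[yx yS].
    by move: yx; rewrite (hx y yS) ?eqxx // /crd e.
  move/proper_card; lia.
have : [set y.2 | y in S'] \proper [set y.2 | y in S].
  apply/properP; split => //; exists x.2; first by apply/imsetP; exists x.
  apply/imsetP => -[y yS' e]; move: yS'; rewrite !inE => /andP[yx yS].
  by move: yx; rewrite (hx y yS) ?eqxx // /crd e.
move/proper_card; lia.
Qed.

End Comb.

Local Open Scope ring_scope.

Theorem lemma2p2 (R : realType) (m n : nat) (p : 'I_m -> R) (q : 'I_n -> R)
    (P : 'M[R]_(m, n)) :
  (2 <= m)%N -> (2 <= n)%N ->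
  (forall i, 0 < p i) -> \sum_(i < m) p i = 1 ->
  (forall j, 0 < q j) -> \sum_(j < n) q j = 1 ->
  coupling p q P -> local_optimal P -> is_tree (supp P) ->
  #|supp P| = (m + n - 1)%N.
Proof.
move=> hm hn hp sp hq sq [hnn hrow hcol] _ [conn hnc].
set S := supp P in conn hnc *.
have covr : forall i, exists x, x \in S /\ x.1 = i.
  move=> i; case: (pselect (exists j, P i j != 0)) => [[j hj]|h].
    by exists (i, j); rewrite inE.
  exfalso.
  have h0 : \sum_(j < n) P i j = 0.
    by apply: big1 => j _; apply/eqP/negPn/negP => hj; apply: h; exists j.
  by have := hp i; rewrite -hrow h0 ltxx.
have covc : forall j, exists x, x \in S /\ x.2 = j.
  move=> j; case: (pselect (exists i, P i j != 0)) => [[i hi]|h].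
    by exists (i, j); rewrite inE.
  exfalso.
  have h0 : \sum_(i < m) P i j = 0.
    by apply: big1 => i _; apply/eqP/negPn/negP => hi; apply: h; exists i.
  by have := hq j; rewrite -hcol h0 ltxx.
have cov : forall L, exists x, x \in S /\ @onL m n L x.
  case => [i|j] /=.
    by have [x [xS e]] := covr i; exists x; rewrite xS e eqxx.
  by have [x [xS e]] := covc j; exists x; rewrite xS e eqxx.
have m0 : (0 < m)%N by lia.
have [u [uS _]] := covr (Ordinal m0).
have h1 := @lb m n S u uS conn cov.
have s0 : (0 < #|S|)%N by apply/card_gt0P; exists u.
have h2 := @ub m n (#|S|.-1) S (esym (prednK s0)) hnc.
have r1 : (#|[set x.1 | x in S]| <= m)%N.
  by rewrite -[X in (_ <= X)%N]card_ord; apply: max_card.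
have r2 : (#|[set x.2 | x in S]| <= n)%N.
  by rewrite -[X in (_ <= X)%N]card_ord; apply: max_card.
lia.
Qed.
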